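(* Let $S$ be a 3-manifold with local coordinates $(x^1,x^2,\varphi)$ and initial data $(g,K)$ with $$g=g_{ab}\,dx^adx^b+\alpha^2(d\varphi+\beta_adx^a)^2\qquad(a,b\in\{1,2\}),$$ all components independent of $\varphi$, and use the frame dual to $\theta^a=dx^a$, $\theta^3=d\varphi+\beta_adx^a$. Let ${}_{|a}$ and $\eta^{ab}$ be the covariant derivative and Levi-Civita tensor of $g_{ab}$, indices $a,b$ being raised/lowered with $g_{ab}$, let $\lambda=\eta^{ab}\beta_{a,b}$, and let $\omega(x^1,x^2)$ be a function. Assume $\alpha$ is not constant, and work where $\alpha^{,c}\alpha_{,c}\neq0$. Define $$\triangledown\alpha=(\alpha^{,c}\alpha_{,c})^{1/2},\quad \xi_b=\frac{\alpha_{,b}}{\triangledown\alpha},\quad \eta^a=\eta^{ab}\xi_b,\quad \kappa=\eta^{bc}\alpha_{,b}(\triangledown\alpha)_{,c}(\triangledown\alpha)^{-2}.$$ Then: (1) The components $T^{ab}$ correspond uniquely to functions $T^a,T^0$ via $$T^{ab}=\eta^aT^b+\xi^a\eta^bT^c\xi_c+\xi^a\xi^bT^0,\qquad T^a=T^{ab}\eta_b,\quad T^0=\xi_aT^{ab}\xi_b.$$ (2) If the functions $\alpha$ and $\triangledown\alpha$ are functionally independent, then the equation $$(\alpha T_a^{\ b})_{|b}=T_3^{\ 3}\alpha_{,a}+\lambda\omega_{,a}\qquad(\ast)$$ is equivalent to the pair of equations $$\alpha\kappa T^0=(\alpha T^a)_{|a}+\alpha\xi_bT^b\xi^a_{\ |a}-\lambda\eta^a\omega_{,a},$$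 $$(\triangledown\alpha)T_3^{\ 3}=(\alpha T^0\xi^b+\alpha\xi_aT^a\eta^b)_{|b}-\alpha\eta^b\xi_{b|a}T^a-\lambda\xi^a\omega_{,a},$$ which determine $T^0$ and $T_3^{\ 3}$ in terms of the remaining data. (3) If $\alpha$ and $\triangledown\alpha$ are functionally dependent, then $(\ast)$ is equivalent to the second equation in (2) together with $$(\alpha\eta_bT^b\eta^a)_{|a}=-(\alpha\xi_bT^b\xi^a)_{|a}-\alpha\xi_bT^b\xi^a_{\ |a}+\lambda\eta^a\omega_{,a}.$$
   Context: Initial data on a 3-manifold $S$: Riemannian metric $g_{ij}$ and symmetric tensor $K_{ij}$; $H=g^{ij}K_{ij}$, $T^{ij}=K^{ij}-Hg^{ij}$. For data independent of $\varphi$ of the stated form, the momentum constraint $\nabla_iT^{ij}=0$ is equivalent to $T_3^{\ a}=\alpha^{-1}\eta^{ab}\omega_{,b}$ for some function $\omega(x^1,x^2)$ together with equation $(\ast)$. Commas denote partial derivatives. *)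

(* Defs.v *)
From Stdlib Require Import Reals Lra.
From Coquelicot Require Import Coquelicot.
Open Scope R_scope.

(** Functions of the two coordinates (x^1, x^2); indices a,b range over {0,1}
    (0 <-> x^1, 1 <-> x^2).  Everything is independent of phi. *)
Definition Fun := R -> R -> R.

Definition sum2 (f : nat -> R) : R := f 0%nat + f 1%nat.

Definition partial (i : nat) (f : Fun) : Fun :=
  match i with
  | 0%nat => fun x y => Derive (fun t => f t y) x
  | _ => fun x y => Derive (fun t => f x t) y
  end.

Definition C0 (U : R * R -> Prop) (f : Fun) : Prop :=
  forall x y, U (x, y) -> continuous (fun p : R * R => f (fst p) (snd p)) (x, y).

Fixpoint Ck (k : nat) (U : R * R -> Prop) (f : Fun) : Prop :=
  match k with
  | 0%nat => C0 U f
  | S k' => (forall x y, U (x, y) ->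
               ex_derive (fun t => f t y) x /\ ex_derive (fun t => f x t) y)
            /\ C0 U f /\ Ck k' U (partial 0 f) /\ Ck k' U (partial 1 f)
  end.

Definition smooth (U : R * R -> Prop) (f : Fun) : Prop := forall k, Ck k U f.

Definition detg (g : nat -> nat -> Fun) : Fun :=
  fun x y => g 0%nat 0%nat x y * g 1%nat 1%nat x y - g 0%nat 1%nat x y * g 1%nat 0%nat x y.

Definition ginv (g : nat -> nat -> Fun) (a b : nat) : Fun :=
  fun x y =>
    match a, b with
    | 0%nat, 0%nat => g 1%nat 1%nat x y / detg g x y
    | 0%nat, _ => - g 0%nat 1%nat x y / detg g x y
    | _, 0%nat => - g 1%nat 0%nat x y / detg g x y
    | _, _ => g 0%nat 0%nat x y / detg g x y
    end.

Definition eps (a b : nat) : R :=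
  match a, b with
  | 0%nat, 1%nat => 1
  | 1%nat, 0%nat => -1
  | _, _ => 0
  end.

Definition etaU (g : nat -> nat -> Fun) (a b : nat) : Fun :=
  fun x y => eps a b / sqrt (detg g x y).

Definition Gam (g : nat -> nat -> Fun) (c a b : nat) : Fun :=
  fun x y => / 2 * sum2 (fun d => ginv g c d x y *
     (partial b (g d a) x y + partial a (g d b) x y - partial d (g a b) x y)).

Definition divV (g : nat -> nat -> Fun) (V : nat -> Fun) : Fun :=
  fun x y => sum2 (fun a => partial a (V a) x y
                     + sum2 (fun b => Gam g a a b x y * V b x y)).

Definition covD (g : nat -> nat -> Fun) (w : nat -> Fun) (b a : nat) : Fun :=
  fun x y => partial a (w b) x y - sum2 (fun c => Gam g c b a x y * w c x y).

Definition divMixed (g : nat -> nat -> Fun) (M : nat -> nat -> Fun) (a : nat) : Fun :=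
  fun x y => sum2 (fun b => partial b (M a b) x y
                  + sum2 (fun c => Gam g b b c x y * M a c x y)
                  - sum2 (fun c => Gam g c a b x y * M c b x y)).

Definition raise (g : nat -> nat -> Fun) (w : nat -> Fun) (a : nat) : Fun :=
  fun x y => sum2 (fun b => ginv g a b x y * w b x y).
Definition lower (g : nat -> nat -> Fun) (V : nat -> Fun) (a : nat) : Fun :=
  fun x y => sum2 (fun b => g a b x y * V b x y).

Definition dalpha (alpha : Fun) (a : nat) : Fun := partial a alpha.
Definition gradsq (g : nat -> nat -> Fun) (alpha : Fun) : Fun :=
  fun x y => sum2 (fun c => raise g (dalpha alpha) c x y * dalpha alpha c x y).
Definition nab (g : nat -> nat -> Fun) (alpha : Fun) : Fun :=
  fun x y => sqrt (gradsq g alpha x y).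

Definition xiL g alpha (b : nat) : Fun :=
  fun x y => dalpha alpha b x y / nab g alpha x y.
Definition xiU g alpha : nat -> Fun := raise g (xiL g alpha).
Definition etaV g alpha (a : nat) : Fun :=
  fun x y => sum2 (fun b => etaU g a b x y * xiL g alpha b x y).
Definition etaVL g alpha : nat -> Fun := lower g (etaV g alpha).
Definition kappa g alpha : Fun :=
  fun x y => sum2 (fun b => sum2 (fun c =>
     etaU g b c x y * dalpha alpha b x y * partial c (nab g alpha) x y))
     / (nab g alpha x y) ^ 2.
Definition lam g (beta : nat -> Fun) : Fun :=
  fun x y => sum2 (fun a => sum2 (fun b => etaU g a b x y * partial b (beta a) x y)).

Definition TV g alpha (T : nat -> nat -> Fun) (a : nat) : Fun :=
  fun x y => sum2 (fun b => T a b x y * etaVL g alpha b x y).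
Definition T0 g alpha (T : nat -> nat -> Fun) : Fun :=
  fun x y => sum2 (fun a => sum2 (fun b =>
     xiL g alpha a x y * T a b x y * xiL g alpha b x y)).
Definition Tmix g (T : nat -> nat -> Fun) (a b : nat) : Fun :=
  fun x y => sum2 (fun c => g a c x y * T c b x y).

Definition recomb g alpha (Tv : nat -> Fun) (t0 : Fun) (a b : nat) : Fun :=
  fun x y => etaV g alpha a x y * Tv b x y
     + xiU g alpha a x y * etaV g alpha b x y
         * sum2 (fun c => Tv c x y * xiL g alpha c x y)
     + xiU g alpha a x y * xiU g alpha b x y * t0 x y.

Definition jac2 (f h : Fun) : Fun :=
  fun x y => partial 0 f x y * partial 1 h x y - partial 1 f x y * partial 0 h x y.
Definition func_indep (U : R * R -> Prop) (f h : Fun) : Prop :=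
  forall x y, U (x, y) -> jac2 f h x y <> 0.
Definition func_dep (U : R * R -> Prop) (f h : Fun) : Prop :=
  forall x y, U (x, y) -> jac2 f h x y = 0.

Definition star_eq (g : nat -> nat -> Fun) (alpha : Fun) (beta : nat -> Fun)
  (omega T33 : Fun) (T : nat -> nat -> Fun) (a : nat) (x y : R) : Prop :=
  divMixed g (fun a' b' => fun x' y' => alpha x' y' * Tmix g T a' b' x' y') a x y
  = T33 x y * dalpha alpha a x y + lam g beta x y * partial a omega x y.

Definition eqA (g : nat -> nat -> Fun) (alpha : Fun) (beta : nat -> Fun)
  (omega : Fun) (T : nat -> nat -> Fun) (x y : R) : Prop :=
  alpha x y * kappa g alpha x y * T0 g alpha T x y
  = divV g (fun a => fun x' y' => alpha x' y' * TV g alpha T a x' y') x y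
    + alpha x y * sum2 (fun b => xiL g alpha b x y * TV g alpha T b x y)
        * divV g (xiU g alpha) x y
    - lam g beta x y * sum2 (fun a => etaV g alpha a x y * partial a omega x y).

Definition eqB (g : nat -> nat -> Fun) (alpha : Fun) (beta : nat -> Fun)
  (omega T33 : Fun) (T : nat -> nat -> Fun) (x y : R) : Prop :=
  nab g alpha x y * T33 x y
  = divV g (fun b => fun x' y' =>
        alpha x' y' * T0 g alpha T x' y' * xiU g alpha b x' y'
      + alpha x' y' * sum2 (fun a => xiL g alpha a x' y' * TV g alpha T a x' y')
          * etaV g alpha b x' y') x y
    - alpha x y * sum2 (fun b => sum2 (fun a =>
        etaV g alpha b x y * covD g (xiL g alpha) b a x y * TV g alpha T a x y))
    - lam g beta x y * sum2 (fun a => xiU g alpha a x y * partial a omega x y).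

Definition eqC (g : nat -> nat -> Fun) (alpha : Fun) (beta : nat -> Fun)
  (omega : Fun) (T : nat -> nat -> Fun) (x y : R) : Prop :=
  divV g (fun a => fun x' y' =>
     alpha x' y' * sum2 (fun b => etaVL g alpha b x' y' * TV g alpha T b x' y')
       * etaV g alpha a x' y') x y
  = - divV g (fun a => fun x' y' =>
        alpha x' y' * sum2 (fun b => xiL g alpha b x' y' * TV g alpha T b x' y')
          * xiU g alpha a x' y') x y
    - alpha x y * sum2 (fun b => xiL g alpha b x y * TV g alpha T b x y)
        * divV g (xiU g alpha) x y
    + lam g beta x y * sum2 (fun a => etaV g alpha a x y * partial a omega x y).

Definition cst (r : R) : Fun := fun _ _ => r.

(* Main.v *)
Require Import Defs.
From Stdlib Require Import Reals Lra Lia.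
From Coquelicot Require Import Coquelicot.
Open Scope R_scope.

Arguments partial i f : simpl never.

Lemma exd_plus f h x : ex_derive f x -> ex_derive h x -> ex_derive (fun t => f t + h t) x.
Proof. intros; apply (ex_derive_plus f h); auto. Qed.
Lemma exd_minus f h x : ex_derive f x -> ex_derive h x -> ex_derive (fun t => f t - h t) x.
Proof. intros; apply (ex_derive_minus f h); auto. Qed.
Lemma exd_opp f x : ex_derive f x -> ex_derive (fun t => - f t) x.
Proof. intros; apply (ex_derive_opp f); auto. Qed.
Lemma exd_const (c x : R) : ex_derive (fun _ => c) x.
Proof. apply (ex_derive_const (K:=R_AbsRing) (V:=R_NormedModule)). Qed.
Lemma exd_sqrt f x : ex_derive f x -> 0 < f x -> ex_derive (fun t => sqrt (f t)) x.
Proof. intros [d Hd] H. eexists. apply is_derive_sqrt; eauto. Qed.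
Lemma Der_sqrt f x : ex_derive f x -> 0 < f x -> Derive (fun t => sqrt (f t)) x = Derive f x / (2 * sqrt (f x)).
Proof. intros Hd H. apply is_derive_unique. apply is_derive_sqrt; auto. apply Derive_correct; auto. Qed.

Definition Dif (U : R * R -> Prop) (f : Fun) : Prop :=
  forall x y, U (x, y) -> ex_derive (fun t => f t y) x /\ ex_derive (fun t => f x t) y.

Lemma Dif_plus U f h : Dif U f -> Dif U h -> Dif U (fun x y => f x y + h x y).
Proof. intros Hf Hh x y Hp; destruct (Hf x y Hp), (Hh x y Hp); split; apply exd_plus; auto. Qed.
Lemma Dif_minus U f h : Dif U f -> Dif U h -> Dif U (fun x y => f x y - h x y).
Proof. intros Hf Hh x y Hp; destruct (Hf x y Hp), (Hh x y Hp); split; apply exd_minus; auto. Qed.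
Lemma Dif_mult U f h : Dif U f -> Dif U h -> Dif U (fun x y => f x y * h x y).
Proof. intros Hf Hh x y Hp; destruct (Hf x y Hp), (Hh x y Hp); split; apply ex_derive_mult; auto. Qed.
Lemma Dif_opp U f : Dif U f -> Dif U (fun x y => - f x y).
Proof. intros Hf x y Hp; destruct (Hf x y Hp); split; apply exd_opp; auto. Qed.
Lemma Dif_const U c : Dif U (fun _ _ => c).
Proof. intros x y Hp; split; apply exd_const. Qed.
Lemma Dif_div U f h : Dif U f -> Dif U h -> (forall x y, U (x,y) -> h x y <> 0) ->
  Dif U (fun x y => f x y / h x y).
Proof. intros Hf Hh Hn x y Hp; destruct (Hf x y Hp), (Hh x y Hp); split; apply ex_derive_div; auto. Qed.
Lemma Dif_sqrt U f : Dif U f -> (forall x y, U (x,y) -> 0 < f x y) ->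
  Dif U (fun x y => sqrt (f x y)).
Proof. intros Hf Hn x y Hp; destruct (Hf x y Hp); split; apply exd_sqrt; auto. Qed.

Section P.
Variables (U : R * R -> Prop) (x y : R).
Hypothesis Hp : U (x, y).

Lemma p_plus k f h : Dif U f -> Dif U h ->
  partial k (fun x y => f x y + h x y) x y = partial k f x y + partial k h x y.
Proof. intros Hf Hh; destruct (Hf x y Hp), (Hh x y Hp).
  destruct k; unfold partial; cbv beta iota; apply Derive_plus; auto. Qed.
Lemma p_minus k f h : Dif U f -> Dif U h ->
  partial k (fun x y => f x y - h x y) x y = partial k f x y - partial k h x y.
Proof. intros Hf Hh; destruct (Hf x y Hp), (Hh x y Hp).
  destruct k; unfold partial; cbv beta iota; apply Derive_minus; auto. Qed.
Lemma p_mult k f h : Dif U f -> Dif U h ->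
  partial k (fun x y => f x y * h x y) x y = partial k f x y * h x y + f x y * partial k h x y.
Proof. intros Hf Hh; destruct (Hf x y Hp), (Hh x y Hp).
  destruct k; unfold partial; cbv beta iota.
  - apply (Derive_mult (fun t => f t y) (fun t => h t y)); auto.
  - apply (Derive_mult (fun t => f x t) (fun t => h x t)); auto. Qed.
Lemma p_opp k f :
  partial k (fun x y => - f x y) x y = - partial k f x y.
Proof. destruct k; unfold partial; cbv beta iota; apply Derive_opp. Qed.
Lemma p_const k c : partial k (fun _ _ => c) x y = 0.
Proof. destruct k; unfold partial; cbv beta iota; apply Derive_const. Qed.
Lemma p_div k f h : Dif U f -> Dif U h -> h x y <> 0 ->
  partial k (fun x y => f x y / h x y) x y =
  (partial k f x y * h x y - f x y * partial k h x y) / (h x y) ^ 2.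
Proof. intros Hf Hh Hn; destruct (Hf x y Hp), (Hh x y Hp).
  destruct k; unfold partial; cbv beta iota.
  - apply (Derive_div (fun t => f t y) (fun t => h t y)); auto.
  - apply (Derive_div (fun t => f x t) (fun t => h x t)); auto. Qed.
Lemma p_sqrt k f : Dif U f -> 0 < f x y ->
  partial k (fun x y => sqrt (f x y)) x y = partial k f x y / (2 * sqrt (f x y)).
Proof. intros Hf Hn; destruct (Hf x y Hp).
  destruct k; unfold partial; cbv beta iota.
  - apply (Der_sqrt (fun t => f t y)); auto.
  - apply (Der_sqrt (fun t => f x t)); auto. Qed.
End P.

Lemma smooth_Dif U f : smooth U f -> Dif U f.
Proof. intros H x y Hp. exact (proj1 (H 1%nat) x y Hp). Qed.

Lemma smooth_partial U f i : smooth U f -> smooth U (partial i f).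
Proof. intros H k. destruct (H (S k)) as [_ [_ [H0 H1]]].
  destruct i; [exact H0|]. exact H1. Qed.

Lemma partial_ext U k f h x y : open U -> U (x,y) ->
  (forall x y, U (x,y) -> f x y = h x y) -> partial k f x y = partial k h x y.
Proof. intros HU Hp Heq. destruct (HU (x,y) Hp) as [eps Heps].
  destruct k; unfold partial; cbv beta iota; apply Derive_ext_loc; exists eps; intros t Ht;
  apply Heq; apply Heps; split; simpl; auto; apply ball_center. Qed.

Lemma schwarz_a U f x y : open U -> U (x,y) -> smooth U f ->
  partial 0 (partial 1 f) x y = partial 1 (partial 0 f) x y.
Proof. intros HU Hp Hs.
  destruct (Hs 2%nat) as [Hd [Hc [H0 H1]]].
  destruct H0 as [Hd0 [Hc0 [Hc00 Hc01]]].
  destruct H1 as [Hd1 [Hc1 [Hc10 Hc11]]].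
  destruct (HU (x,y) Hp) as [eps Heps].
  unfold partial; cbv beta iota.
  apply Schwarz.
  - exists eps. intros u v Hu Hv.
    assert (Huv : U (u,v)). { apply Heps. split; simpl; auto. }
    destruct (Hd u v Huv). destruct (Hd0 u v Huv). destruct (Hd1 u v Huv).
    repeat split; auto.
  - apply continuity_2d_pt_filterlim. apply (Hc10 x y Hp).
  - apply continuity_2d_pt_filterlim. apply (Hc01 x y Hp).
Qed.

Opaque partial Derive sqrt.

Definition wv (g : nat -> nat -> Fun) (alpha : Fun) (b : nat) (x y : R) : R :=
  sum2 (fun c => etaV g alpha c x y * covD g (xiL g alpha) c b x y).

Definition Mfun (g : nat -> nat -> Fun) (alpha : Fun) (T : nat -> nat -> Fun) (a b : nat) : Fun :=
  fun x y => alpha x y * Tmix g T a b x y.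

Section Main.
Variables (U : R * R -> Prop) (g : nat -> nat -> Fun) (alpha : Fun)
  (beta : nat -> Fun) (omega T33 : Fun) (T : nat -> nat -> Fun).
Hypothesis HU : open U.
Hypothesis Hgs : forall a b, (a < 2)%nat -> (b < 2)%nat -> smooth U (g a b).
Hypothesis Has : smooth U alpha.
Hypothesis HTs : forall a b, (a < 2)%nat -> (b < 2)%nat -> smooth U (T a b).
Hypothesis Hmet : forall x y, U (x, y) ->
     g 0%nat 1%nat x y = g 1%nat 0%nat x y /\ 0 < g 0%nat 0%nat x y /\ 0 < detg g x y.
Hypothesis Hgr : forall x y, U (x, y) -> gradsq g alpha x y <> 0.
Hypothesis HTsym : forall x y, U (x, y) -> T 0%nat 1%nat x y = T 1%nat 0%nat x y.

Lemma Dg a b : (a < 2)%nat -> (b < 2)%nat -> Dif U (g a b).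
Proof. intros; apply smooth_Dif; auto. Qed.
Lemma DT a b : (a < 2)%nat -> (b < 2)%nat -> Dif U (T a b).
Proof. intros; apply smooth_Dif; auto. Qed.
Lemma Dal : Dif U alpha.
Proof. apply smooth_Dif; auto. Qed.
Lemma Ddal c : Dif U (dalpha alpha c).
Proof. apply smooth_Dif; apply smooth_partial; auto. Qed.

Lemma detpos x y : U (x,y) -> 0 < detg g x y.
Proof. intros H; apply (Hmet x y H). Qed.

Lemma Ddet : Dif U (detg g).
Proof. unfold detg. apply Dif_minus; apply Dif_mult; apply Dg; lia. Qed.
Lemma Dsd : Dif U (fun x y => sqrt (detg g x y)).
Proof. apply Dif_sqrt. apply Ddet. apply detpos. Qed.
Lemma DetaU a b : Dif U (etaU g a b).
Proof. unfold etaU. apply Dif_div. apply Dif_const. apply Dsd.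
  intros x y H. apply Rgt_not_eq. apply sqrt_lt_R0. apply detpos; auto. Qed.
Lemma Dginv a b : (a < 2)%nat -> (b < 2)%nat -> Dif U (ginv g a b).
Proof. intros Ha Hb. assert (Hn : forall x y, U (x,y) -> detg g x y <> 0).
  { intros x y H; apply Rgt_not_eq, detpos; auto. }
  unfold ginv; destruct a as [|[|a]]; destruct b as [|[|b]]; try lia; cbv beta iota.
  - apply (Dif_div U (g 1%nat 1%nat) (detg g)); auto using Ddet; apply Dg; lia.
  - apply (Dif_div U (fun x y => - g 0%nat 1%nat x y) (detg g)); auto using Ddet; apply Dif_opp; apply Dg; lia.
  - apply (Dif_div U (fun x y => - g 1%nat 0%nat x y) (detg g)); auto using Ddet; apply Dif_opp; apply Dg; lia.
  - apply (Dif_div U (g 0%nat 0%nat) (detg g)); auto using Ddet; apply Dg; lia.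
Qed.

Lemma gradsq_ge x y : U (x,y) -> 0 <= gradsq g alpha x y.
Proof. intros H. destruct (Hmet x y H) as [H01 [H00 Hd]].
  unfold gradsq, raise, ginv, sum2. rewrite <- H01.
  set (a0 := dalpha alpha 0 x y). set (a1 := dalpha alpha 1 x y).
  unfold detg in *. rewrite <- H01 in *.
  set (D := g 0%nat 0%nat x y * g 1%nat 1%nat x y - g 0%nat 1%nat x y * g 0%nat 1%nat x y) in *.
  assert (E : g 1%nat 1%nat x y / D * a0 * a0 + - g 0%nat 1%nat x y / D * a1 * a0
    + (- g 0%nat 1%nat x y / D * a0 * a1 + g 0%nat 0%nat x y / D * a1 * a1)
    = ((g 0%nat 0%nat x y * a1 - g 0%nat 1%nat x y * a0)^2 + D * a0^2) / (g 0%nat 0%nat x y * D)).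
  { unfold D. field. split; [apply Rgt_not_eq; exact Hd | lra]. }
  assert (E2 : (g 1%nat 1%nat x y / D * a0 + - g 0%nat 1%nat x y / D * a1) * a0 +
    (- g 0%nat 1%nat x y / D * a0 + g 0%nat 0%nat x y / D * a1) * a1 =
    ((g 0%nat 0%nat x y * a1 - g 0%nat 1%nat x y * a0)^2 + D * a0^2) / (g 0%nat 0%nat x y * D)).
  { rewrite <- E. ring. }
  rewrite E2.
  apply Rmult_le_pos. apply Rplus_le_le_0_compat. apply pow2_ge_0. apply Rmult_le_pos. lra. apply pow2_ge_0.
    apply Rlt_le, Rinv_0_lt_compat. apply Rmult_lt_0_compat; lra.
Qed.

Lemma gradsq_pos x y : U (x,y) -> 0 < gradsq g alpha x y.
Proof. intros H. destruct (gradsq_ge x y H). auto. exfalso; apply (Hgr x y H); auto. Qed.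

Ltac dif := repeat match goal with
 | |- Dif _ (fun x y => @?a x y + @?b x y) => apply (Dif_plus U a b)
 | |- Dif _ (fun x y => @?a x y - @?b x y) => apply (Dif_minus U a b)
 | |- Dif _ (fun x y => @?a x y * @?b x y) => apply (Dif_mult U a b)
 | |- Dif _ (fun x y => - @?a x y) => apply (Dif_opp U a)
 | |- Dif _ (fun x y => dalpha _ ?c x y) => apply (Ddal c)
 | |- Dif _ (fun x y => ginv _ ?a ?b x y) => apply (Dginv a b); lia
 | |- Dif _ (fun x y => g ?a ?b x y) => apply (Dg a b); lia
 | |- Dif _ (fun x y => T ?a ?b x y) => apply (DT a b); lia
 | |- Dif _ (fun x y => alpha x y) => apply Dal
 | |- Dif _ (fun x y => etaU _ ?a ?b x y) => apply (DetaU a b)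
 | |- Dif _ (fun x y => ?c) => apply (Dif_const U c)
 end.

Lemma Dgradsq : Dif U (gradsq g alpha).
Proof. unfold gradsq, raise, sum2. dif. Qed.
Lemma Dnab : Dif U (nab g alpha).
Proof. unfold nab. apply Dif_sqrt. apply Dgradsq. apply gradsq_pos. Qed.
Lemma nab_pos x y : U (x,y) -> 0 < nab g alpha x y.
Proof. intros H; unfold nab; apply sqrt_lt_R0, gradsq_pos; auto. Qed.
Lemma DxiL c : Dif U (xiL g alpha c).
Proof. unfold xiL. apply Dif_div. apply Ddal. apply Dnab. intros; apply Rgt_not_eq, nab_pos; auto. Qed.
Lemma DxiU a : (a < 2)%nat -> Dif U (xiU g alpha a).
Proof. intros Ha. unfold xiU, raise, sum2.
  apply (Dif_plus U (fun x y => ginv g a 0%nat x y * xiL g alpha 0%nat x y)); apply Dif_mult;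
  [apply Dginv; lia | apply DxiL | apply Dginv; lia | apply DxiL]. Qed.
Lemma DetaV a : Dif U (etaV g alpha a).
Proof. unfold etaV, sum2.
  apply (Dif_plus U (fun x y => etaU g a 0%nat x y * xiL g alpha 0%nat x y)); apply Dif_mult;
  [apply DetaU | apply DxiL | apply DetaU | apply DxiL]. Qed.
Lemma DetaVL a : (a < 2)%nat -> Dif U (etaVL g alpha a).
Proof. intros Ha. unfold etaVL, lower, sum2.
  apply (Dif_plus U (fun x y => g a 0%nat x y * etaV g alpha 0%nat x y)); apply Dif_mult;
  [apply Dg; lia | apply DetaV | apply Dg; lia | apply DetaV]. Qed.
Lemma DTV a : (a < 2)%nat -> Dif U (TV g alpha T a).
Proof. intros Ha. unfold TV, sum2.
  apply (Dif_plus U (fun x y => T a 0%nat x y * etaVL g alpha 0%nat x y)); apply Dif_mult;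
  [apply DT; lia | apply DetaVL; lia | apply DT; lia | apply DetaVL; lia]. Qed.
Lemma DTmix a b : (a < 2)%nat -> (b < 2)%nat -> Dif U (Tmix g T a b).
Proof. intros Ha Hb. unfold Tmix, sum2. dif. Qed.
Lemma DMf a b : (a < 2)%nat -> (b < 2)%nat -> Dif U (fun x y => alpha x y * Tmix g T a b x y).
Proof. intros Ha Hb. apply Dif_mult. apply Dal. apply DTmix; auto. Qed.

Ltac dif2 := repeat match goal with
 | |- Dif ?V ?f => progress (change (Dif V (fun x y => f x y)); cbv beta)
 | |- Dif _ (fun x y => @?a x y + @?b x y) => apply (Dif_plus U a b)
 | |- Dif _ (fun x y => @?a x y - @?b x y) => apply (Dif_minus U a b)
 | |- Dif _ (fun x y => @?a x y * @?b x y) => apply (Dif_mult U a b)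
 | |- Dif _ (fun x y => - @?a x y) => apply (Dif_opp U a)
 | |- Dif _ (fun x y => dalpha _ ?c x y) => apply (Ddal c)
 | |- Dif _ (fun x y => ginv _ ?a ?b x y) => apply (Dginv a b); lia
 | |- Dif _ (fun x y => g ?a ?b x y) => apply (Dg a b); lia
 | |- Dif _ (fun x y => T ?a ?b x y) => apply (DT a b); lia
 | |- Dif _ (fun x y => alpha x y) => apply Dal
 | |- Dif _ (fun x y => etaU _ ?a ?b x y) => apply (DetaU a b)
 | |- Dif _ (fun x y => xiL _ _ ?a x y) => apply (DxiL a)
 | |- Dif _ (fun x y => xiU _ _ ?a x y) => apply (DxiU a); lia
 | |- Dif _ (fun x y => etaV _ _ ?a x y) => apply (DetaV a)
 | |- Dif _ (fun x y => etaVL _ _ ?a x y) => apply (DetaVL a); lia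
 | |- Dif _ (fun x y => TV _ _ _ ?a x y) => apply (DTV a); lia
 | |- Dif _ (fun x y => Tmix _ _ ?a ?b x y) => apply (DTmix a b); lia
 | |- Dif _ (fun x y => nab _ _ x y) => apply Dnab
 | |- Dif _ (fun x y => Mfun _ _ _ ?a ?b x y) => apply (DMf a b); lia
 | |- Dif _ (fun x y => partial ?c alpha x y) => apply (Ddal c)
 | |- Dif _ (fun x y => detg g x y) => apply Ddet
 | |- Dif _ (fun x y => sqrt (detg g x y)) => apply Dsd
 | |- Dif _ (fun x y => @?a x y / @?b x y) => apply (Dif_div U a b); [ | | intros; apply Rgt_not_eq;
      first [apply detpos | apply nab_pos | apply sqrt_lt_R0; apply detpos]; auto]
 | |- Dif _ (fun x y => ?c) => apply (Dif_const U c)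
 end.


Lemma frame_alg (G00 G01 G11 a0 a1 N sd : R) :
  0 < N -> 0 < sd -> 0 < G00 -> sd * sd = G00 * G11 - G01 * G01 ->
  N * N = (G11 * a0 * a0 - 2 * G01 * a0 * a1 + G00 * a1 * a1) / (sd * sd) ->
  let x0 := a0 / N in let x1 := a1 / N in
  let e0 := (G00 * x1 - G01 * x0) / sd in let e1 := (G01 * x1 - G11 * x0) / sd in
  G00 = x0 * x0 + e0 * e0 /\ G01 = x0 * x1 + e0 * e1 /\ G11 = x1 * x1 + e1 * e1 /\
  sd = x1 * e0 - x0 * e1.
Proof.
  intros HN Hs H0 HD HQ x0 x1 e0 e1.
  assert (HQ' : G11 * x0 * x0 - 2 * G01 * x0 * x1 + G00 * x1 * x1 = sd * sd).
  { unfold x0, x1. apply (Rmult_eq_reg_r (N*N)); [|nra].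
    replace ((G11 * (a0 / N) * (a0 / N) - 2 * G01 * (a0 / N) * (a1 / N) + G00 * (a1 / N) * (a1 / N)) * (N * N))
      with (G11 * a0 * a0 - 2 * G01 * a0 * a1 + G00 * a1 * a1) by (field; lra).
    rewrite HQ. field. lra. }
  assert (Hsd : sd <> 0) by lra.
  repeat split.
  - assert (E : (x0 * x0 + e0 * e0 - G00) * (sd * sd) =
       x0 * x0 * (sd * sd - (G00 * G11 - G01 * G01)) - G00 * (sd * sd - (G11 * x0 * x0 - 2 * G01 * x0 * x1 + G00 * x1 * x1)))
      by (unfold e0, e1; field; auto).
    rewrite HQ' in E. rewrite <- HD in E. replace (sd*sd - sd*sd) with 0 in E by ring.
    rewrite !Rmult_0_r, Rminus_0_r in E.
    apply Rmult_integral in E. destruct E as [E|E]; [lra|nra].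
  - assert (E : (x0 * x1 + e0 * e1 - G01) * (sd * sd) =
       x0 * x1 * (sd * sd - (G00 * G11 - G01 * G01)) - G01 * (sd * sd - (G11 * x0 * x0 - 2 * G01 * x0 * x1 + G00 * x1 * x1)))
      by (unfold e0, e1; field; auto).
    rewrite HQ' in E. rewrite <- HD in E. replace (sd*sd - sd*sd) with 0 in E by ring.
    rewrite !Rmult_0_r, Rminus_0_r in E.
    apply Rmult_integral in E. destruct E as [E|E]; [lra|nra].
  - assert (E : (x1 * x1 + e1 * e1 - G11) * (sd * sd) =
       x1 * x1 * (sd * sd - (G00 * G11 - G01 * G01)) - G11 * (sd * sd - (G11 * x0 * x0 - 2 * G01 * x0 * x1 + G00 * x1 * x1)))
      by (unfold e0, e1; field; auto).
    rewrite HQ' in E. rewrite <- HD in E. replace (sd*sd - sd*sd) with 0 in E by ring.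
    rewrite !Rmult_0_r, Rminus_0_r in E.
    apply Rmult_integral in E. destruct E as [E|E]; [lra|nra].
  - assert (E : (x1 * e0 - x0 * e1) * sd = G11 * x0 * x0 - 2 * G01 * x0 * x1 + G00 * x1 * x1)
      by (unfold e0, e1; field; auto).
    rewrite HQ' in E. apply (Rmult_eq_reg_r sd); [|lra]. lra.
Qed.

Lemma frame x y : U (x,y) -> exists x0 x1 e0 e1 N sd,
  0 < N /\ 0 < sd /\
  xiL g alpha 0%nat x y = x0 /\ xiL g alpha 1%nat x y = x1 /\
  etaVL g alpha 0%nat x y = e0 /\ etaVL g alpha 1%nat x y = e1 /\
  nab g alpha x y = N /\ sqrt (detg g x y) = sd /\ detg g x y = sd * sd /\
  partial 0%nat alpha x y = N * x0 /\ partial 1%nat alpha x y = N * x1 /\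
  g 0%nat 0%nat x y = x0 * x0 + e0 * e0 /\ g 0%nat 1%nat x y = x0 * x1 + e0 * e1 /\
  g 1%nat 0%nat x y = x0 * x1 + e0 * e1 /\ g 1%nat 1%nat x y = x1 * x1 + e1 * e1 /\
  sd = x1 * e0 - x0 * e1.
Proof.
  intros H. destruct (Hmet x y H) as [H01 [H00 Hd]].
  pose proof (nab_pos x y H) as HN. pose proof (gradsq_pos x y H) as Hg.
  set (N := nab g alpha x y) in *.
  set (sd := sqrt (detg g x y)).
  assert (Hsd : 0 < sd) by (apply sqrt_lt_R0; auto).
  assert (Hsd2 : detg g x y = sd * sd) by (unfold sd; rewrite sqrt_sqrt; lra).
  assert (HN2 : N * N = gradsq g alpha x y) by (unfold N, nab; rewrite sqrt_sqrt; lra).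
  set (a0 := partial 0%nat alpha x y). set (a1 := partial 1%nat alpha x y).
  set (G00 := g 0%nat 0%nat x y) in *. set (G01 := g 0%nat 1%nat x y) in *.
  set (G11 := g 1%nat 1%nat x y) in *.
  assert (HD : sd * sd = G00 * G11 - G01 * G01).
  { rewrite <- Hsd2. unfold detg. fold G00 G01 G11. rewrite <- H01. fold G01. ring. }
  assert (HQ : N * N = (G11 * a0 * a0 - 2 * G01 * a0 * a1 + G00 * a1 * a1) / (sd * sd)).
  { rewrite HN2. unfold gradsq, raise, ginv, sum2, dalpha. cbv beta iota.
    rewrite Hsd2. fold G00 G01 G11 a0 a1. rewrite <- H01. fold G01. field. lra. }
  pose proof (frame_alg G00 G01 G11 a0 a1 N sd HN Hsd H00 HD HQ) as F. simpl in F.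
  destruct F as [F00 [F01 [F11 Fsd]]].
  exists (a0 / N), (a1 / N), ((G00 * (a1 / N) - G01 * (a0 / N)) / sd),
    ((G01 * (a1 / N) - G11 * (a0 / N)) / sd), N, sd.
  assert (X0 : xiL g alpha 0%nat x y = a0 / N) by reflexivity.
  assert (X1 : xiL g alpha 1%nat x y = a1 / N) by reflexivity.
  repeat split; auto.
  - unfold etaVL, lower, etaV, etaU, eps, sum2. cbv beta iota. rewrite X0, X1. fold sd G00 G01.
    field. lra.
  - unfold etaVL, lower, etaV, etaU, eps, sum2. cbv beta iota. rewrite X0, X1. fold sd G11.
    rewrite <- H01. fold G01. field. lra.
  - unfold a0; field; lra.
  - unfold a1; field; lra.
  - rewrite <- H01. exact F01.
Qed.

Section Pt.
Variables (x y : R).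
Hypothesis Hp : U (x, y).

Lemma dg10 k : partial k (g 1%nat 0%nat) x y = partial k (g 0%nat 1%nat) x y.
Proof. apply (partial_ext U); auto. intros; symmetry; apply Hmet; auto. Qed.

Lemma ddet k : partial k (detg g) x y =
  partial k (g 0%nat 0%nat) x y * g 1%nat 1%nat x y + g 0%nat 0%nat x y * partial k (g 1%nat 1%nat) x y
  - (partial k (g 0%nat 1%nat) x y * g 1%nat 0%nat x y + g 0%nat 1%nat x y * partial k (g 1%nat 0%nat) x y).
Proof. unfold detg. rewrite (p_minus U x y Hp). rewrite !(p_mult U x y Hp). reflexivity.
  all: dif2. Qed.

Lemma dnab k : partial k (nab g alpha) x y = partial k (gradsq g alpha) x y / (2 * nab g alpha x y).
Proof. unfold nab. rewrite (p_sqrt U x y Hp). reflexivity. apply Dgradsq. apply gradsq_pos; auto. Qed.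

Lemma schw : partial 0%nat (partial 1%nat alpha) x y = partial 1%nat (partial 0%nat alpha) x y.
Proof. apply (schwarz_a U); auto. Qed.

Ltac nz := apply Rgt_not_eq; first [apply detpos | apply nab_pos | apply sqrt_lt_R0; apply detpos
   | apply gradsq_pos]; auto.

Ltac dexp := repeat first [
    rewrite (p_plus U x y Hp) by dif2
  | rewrite (p_minus U x y Hp) by dif2
  | rewrite (p_mult U x y Hp) by dif2
  | rewrite p_opp
  | rewrite p_const
  | rewrite (p_div U x y Hp) by (dif2 || nz)
  | rewrite (p_sqrt U x y Hp) by (dif2 || (apply detpos; auto))
  | rewrite ddet
  | rewrite dnab
  | progress (unfold gradsq, raise, ginv, sum2; cbv beta iota) ].

Ltac unf := unfold wv, xiU, raise, etaVL, lower, etaV, covD, divV, kappa, TV, T0, Tmix, Gam, ginv,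
   etaU, eps, xiL, dalpha, sum2; cbv beta iota.

Ltac fr := destruct (frame x y Hp) as (x0 & x1 & e0 & e1 & N & sd & HN & Hsd & X0 & X1 & E0 & E1 & EN & Esd & Edet
       & A0 & A1 & G00 & G01 & G10 & G11 & Hsdf);
    rewrite ?X0, ?X1, ?E0, ?E1, ?EN, ?Esd, ?Edet, ?A0, ?A1, ?G00, ?G01, ?G10, ?G11;
    clear Esd Edet; subst sd.
Ltac fclose := unf; dexp; unfold dalpha; rewrite ?dg10, ?schw; fr; field; repeat split; lra.

Lemma F1 a b : (a < 2)%nat -> (b < 2)%nat ->
  partial b (xiU g alpha a) x y + sum2 (fun c => Gam g a b c x y * xiU g alpha c x y)
  = etaV g alpha a x y * sum2 (fun c => etaV g alpha c x y * covD g (xiL g alpha) c b x y).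
Proof.
  intros Ha Hb. destruct a as [|[|a]]; try lia; destruct b as [|[|b]]; try lia; fclose.
Qed.

Lemma F2 a b : (a < 2)%nat -> (b < 2)%nat ->
  partial b (etaV g alpha a) x y + sum2 (fun c => Gam g a b c x y * etaV g alpha c x y)
  = - xiU g alpha a x y * wv g alpha b x y.
Proof.
  intros Ha Hb. destruct a as [|[|a]]; try lia; destruct b as [|[|b]]; try lia; fclose.
Qed.

Lemma F3 : sum2 (fun b => xiU g alpha b x y * wv g alpha b x y) = - kappa g alpha x y.
Proof. fclose. Qed.

Lemma Fdiv : divV g (xiU g alpha) x y = sum2 (fun a => etaV g alpha a x y * wv g alpha a x y).
Proof. fclose. Qed.

Lemma DMfun a b : (a < 2)%nat -> (b < 2)%nat -> Dif U (Mfun g alpha T a b).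
Proof. intros; apply DMf; auto. Qed.

Lemma Leib (v : nat -> Fun) : Dif U (v 0%nat) -> Dif U (v 1%nat) ->
  sum2 (fun a => v a x y * divMixed g (Mfun g alpha T) a x y) =
  divV g (fun b => fun x y => sum2 (fun a => Mfun g alpha T a b x y * v a x y)) x y
  - sum2 (fun a => sum2 (fun b => Mfun g alpha T a b x y *
       (partial b (v a) x y + sum2 (fun c => Gam g a b c x y * v c x y)))).
Proof.
  intros Hv0 Hv1. unfold divV, divMixed, sum2; cbv beta.
  rewrite !(p_plus U x y Hp); try (dif2; first [exact Hv0 | exact Hv1 | apply DMfun; lia]).
  rewrite !(p_mult U x y Hp); try (dif2; first [exact Hv0 | exact Hv1 | apply DMfun; lia]).
  unfold Gam, sum2. rewrite !dg10. ring.
Qed.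

Ltac vclose := unfold Mfun, recomb, cst; unf;
  rewrite <- ?(HTsym x y Hp); fr; field; repeat split; lra.

Lemma PW1 b : (b < 2)%nat ->
  sum2 (fun a => Mfun g alpha T a b x y * xiU g alpha a x y) =
  alpha x y * T0 g alpha T x y * xiU g alpha b x y
  + alpha x y * sum2 (fun a => xiL g alpha a x y * TV g alpha T a x y) * etaV g alpha b x y.
Proof. intros Hb; destruct b as [|[|b]]; try lia; vclose. Qed.

Lemma PW2 b : (b < 2)%nat ->
  sum2 (fun a => Mfun g alpha T a b x y * etaV g alpha a x y) = alpha x y * TV g alpha T b x y.
Proof. intros Hb; destruct b as [|[|b]]; try lia; vclose. Qed.

Lemma PWa1 : sum2 (fun a => etaV g alpha a x y * dalpha alpha a x y) = 0.
Proof. vclose. Qed.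
Lemma PWa2 : sum2 (fun a => xiU g alpha a x y * dalpha alpha a x y) = nab g alpha x y.
Proof. vclose. Qed.

Lemma PWc (Z0 Z1 : R) a : (a < 2)%nat ->
  (if Nat.eqb a 0 then Z0 else Z1) =
  etaVL g alpha a x y * (etaV g alpha 0%nat x y * Z0 + etaV g alpha 1%nat x y * Z1)
  + xiL g alpha a x y * (xiU g alpha 0%nat x y * Z0 + xiU g alpha 1%nat x y * Z1).
Proof. intros Ha; destruct a as [|[|a]]; try lia; simpl Nat.eqb; cbv iota; vclose. Qed.

Lemma PW3 a : (a < 2)%nat ->
  TV g alpha T a x y = sum2 (fun b => etaVL g alpha b x y * TV g alpha T b x y) * etaV g alpha a x y
   + sum2 (fun b => xiL g alpha b x y * TV g alpha T b x y) * xiU g alpha a x y.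
Proof. intros Ha; destruct a as [|[|a]]; try lia; vclose. Qed.

Lemma P1a a b : (a < 2)%nat -> (b < 2)%nat ->
  T a b x y = recomb g alpha (TV g alpha T) (T0 g alpha T) a b x y.
Proof. intros Ha Hb; destruct a as [|[|a]]; try lia; destruct b as [|[|b]]; try lia; vclose. Qed.

Lemma P1b (t : nat -> R) (t0 : R) :
  let M := recomb g alpha (fun a => cst (t a)) (cst t0) in
  M 0%nat 1%nat x y = M 1%nat 0%nat x y /\
  (forall a, (a < 2)%nat -> TV g alpha M a x y = t a) /\
  T0 g alpha M x y = t0.
Proof. intros M. unfold M. split; [|split].
  - vclose.
  - intros a Ha; destruct a as [|[|a]]; try lia; vclose.
  - vclose.
Qed.
End Pt.

Lemma sum2_ext (f h : nat -> R) : (forall i, (i < 2)%nat -> f i = h i) -> sum2 f = sum2 h.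
Proof. intros H; unfold sum2; rewrite (H 0%nat), (H 1%nat); auto. Qed.

Lemma divV_ext (V W : nat -> Fun) x y : U (x,y) ->
  (forall b x y, (b < 2)%nat -> U (x,y) -> V b x y = W b x y) ->
  divV g V x y = divV g W x y.
Proof. intros Hp H. unfold divV, sum2.
  rewrite (partial_ext U 0%nat (V 0%nat) (W 0%nat) x y HU Hp) by (intros; apply H; auto).
  rewrite (partial_ext U 1%nat (V 1%nat) (W 1%nat) x y HU Hp) by (intros; apply H; auto).
  rewrite !(H 0%nat x y), !(H 1%nat x y); auto. Qed.

Lemma divV_add (V W : nat -> Fun) x y : U (x,y) ->
  Dif U (V 0%nat) -> Dif U (V 1%nat) -> Dif U (W 0%nat) -> Dif U (W 1%nat) ->
  divV g (fun a => fun x y => V a x y + W a x y) x y = divV g V x y + divV g W x y.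
Proof. intros Hp H0 H1 H2 H3. unfold divV, sum2.
  rewrite !(p_plus U x y Hp); auto. ring. Qed.

Section Asm.
Variables (x y : R).
Hypothesis Hp : U (x, y).

Let Dv a := divMixed g (Mfun g alpha T) a x y.
Let PA := divV g (fun a => fun x' y' => alpha x' y' * TV g alpha T a x' y') x y.
Let PB := divV g (fun b => fun x' y' =>
        alpha x' y' * T0 g alpha T x' y' * xiU g alpha b x' y'
      + alpha x' y' * sum2 (fun a => xiL g alpha a x' y' * TV g alpha T a x' y')
          * etaV g alpha b x' y') x y.
Let s0 := sum2 (fun a => xiL g alpha a x y * TV g alpha T a x y).
Let dv := divV g (xiU g alpha) x y.

Lemma HEta : sum2 (fun a => etaV g alpha a x y * Dv a) =
  PA - alpha x y * T0 g alpha T x y * kappa g alpha x y + alpha x y * s0 * dv.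
Proof.
  unfold Dv. rewrite (Leib x y Hp (etaV g alpha) (DetaV 0) (DetaV 1)).
  assert (Ext : divV g (fun b => fun x y => sum2 (fun a => Mfun g alpha T a b x y * etaV g alpha a x y)) x y = PA).
  { unfold PA. apply divV_ext; auto. intros b x' y' Hb Hq. apply PW2; auto. }
  rewrite Ext.
  assert (Inner : sum2 (fun a => sum2 (fun b => Mfun g alpha T a b x y *
       (partial b (etaV g alpha a) x y + sum2 (fun c => Gam g a b c x y * etaV g alpha c x y))))
    = - sum2 (fun b => sum2 (fun a => Mfun g alpha T a b x y * xiU g alpha a x y) * wv g alpha b x y)).
  { transitivity (sum2 (fun a => sum2 (fun b => Mfun g alpha T a b x y * (- xiU g alpha a x y * wv g alpha b x y)))).
    - apply sum2_ext; intros i Hi; apply sum2_ext; intros j Hj. rewrite F2; auto.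
    - unfold sum2; ring. }
  rewrite Inner.
  rewrite (sum2_ext (fun b => sum2 (fun a => Mfun g alpha T a b x y * xiU g alpha a x y) * wv g alpha b x y)
     (fun b => (alpha x y * T0 g alpha T x y * xiU g alpha b x y
      + alpha x y * sum2 (fun a => xiL g alpha a x y * TV g alpha T a x y) * etaV g alpha b x y) * wv g alpha b x y)).
  2: { intros i Hi. rewrite PW1; auto. }
  assert (K : kappa g alpha x y = - sum2 (fun b => xiU g alpha b x y * wv g alpha b x y)) by (rewrite F3; auto; ring).
  rewrite K. unfold dv. rewrite Fdiv; auto. unfold s0. unfold sum2. ring.
Qed.

Lemma HXi : sum2 (fun a => xiU g alpha a x y * Dv a) =
  PB - alpha x y * sum2 (fun b => sum2 (fun a =>
        etaV g alpha b x y * covD g (xiL g alpha) b a x y * TV g alpha T a x y)).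
Proof.
  unfold Dv. rewrite (Leib x y Hp (xiU g alpha) (DxiU 0 ltac:(lia)) (DxiU 1 ltac:(lia))).
  assert (Ext : divV g (fun b => fun x y => sum2 (fun a => Mfun g alpha T a b x y * xiU g alpha a x y)) x y = PB).
  { unfold PB. apply divV_ext; auto. intros b x' y' Hb Hq. apply PW1; auto. }
  rewrite Ext.
  assert (Inner : sum2 (fun a => sum2 (fun b => Mfun g alpha T a b x y *
       (partial b (xiU g alpha a) x y + sum2 (fun c => Gam g a b c x y * xiU g alpha c x y))))
    = sum2 (fun b => sum2 (fun a => Mfun g alpha T a b x y * etaV g alpha a x y) * wv g alpha b x y)).
  { transitivity (sum2 (fun a => sum2 (fun b => Mfun g alpha T a b x y * (etaV g alpha a x y * wv g alpha b x y)))).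
    - apply sum2_ext; intros i Hi; apply sum2_ext; intros j Hj. rewrite F1; auto.
    - unfold sum2; ring. }
  rewrite Inner.
  rewrite (sum2_ext (fun b => sum2 (fun a => Mfun g alpha T a b x y * etaV g alpha a x y) * wv g alpha b x y)
     (fun b => alpha x y * TV g alpha T b x y * wv g alpha b x y)).
  2: { intros i Hi. rewrite PW2; auto. }
  unfold wv, sum2. ring.
Qed.

Let Ev a := Dv a - (T33 x y * dalpha alpha a x y + lam g beta x y * partial a omega x y).

Lemma SEta : sum2 (fun a => etaV g alpha a x y * Ev a) =
  (PA + alpha x y * s0 * dv - lam g beta x y * sum2 (fun a => etaV g alpha a x y * partial a omega x y))
  - alpha x y * kappa g alpha x y * T0 g alpha T x y.
Proof.
  transitivity (sum2 (fun a => etaV g alpha a x y * Dv a) - T33 x y * sum2 (fun a => etaV g alpha a x y * dalpha alpha a x y)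
    - lam g beta x y * sum2 (fun a => etaV g alpha a x y * partial a omega x y)).
  { unfold Ev, sum2; ring. }
  rewrite HEta, PWa1; auto. ring.
Qed.

Lemma SXi : sum2 (fun a => xiU g alpha a x y * Ev a) =
  (PB - alpha x y * sum2 (fun b => sum2 (fun a =>
        etaV g alpha b x y * covD g (xiL g alpha) b a x y * TV g alpha T a x y))
    - lam g beta x y * sum2 (fun a => xiU g alpha a x y * partial a omega x y))
  - nab g alpha x y * T33 x y.
Proof.
  transitivity (sum2 (fun a => xiU g alpha a x y * Dv a) - T33 x y * sum2 (fun a => xiU g alpha a x y * dalpha alpha a x y)
    - lam g beta x y * sum2 (fun a => xiU g alpha a x y * partial a omega x y)).
  { unfold Ev, sum2; ring. }
  rewrite HXi, PWa2; auto. ring.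
Qed.

Lemma core : (forall a, (a < 2)%nat -> star_eq g alpha beta omega T33 T a x y) <->
  (eqA g alpha beta omega T x y /\ eqB g alpha beta omega T33 T x y).
Proof.
  assert (Hst : forall a, star_eq g alpha beta omega T33 T a x y <-> Ev a = 0).
  { intros a. unfold star_eq, Ev, Dv. change (fun a' b' : nat => fun x' y' : R => alpha x' y' * Tmix g T a' b' x' y')
      with (Mfun g alpha T). split; intros; lra. }
  pose proof SEta as S1. pose proof SXi as S2.
  split.
  - intros H. assert (E0 : Ev 0%nat = 0) by (apply Hst, H; lia).
    assert (E1 : Ev 1%nat = 0) by (apply Hst, H; lia).
    unfold sum2 in S1, S2. rewrite E0, E1 in S1, S2.
    unfold eqA, eqB. fold PA PB s0 dv. unfold sum2. split; lra.
  - intros [HA HB] a Ha. apply Hst.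
    unfold eqA in HA. unfold eqB in HB. fold PA s0 dv in HA. fold PB in HB.
    assert (Z1 : sum2 (fun a => etaV g alpha a x y * Ev a) = 0) by (rewrite S1; unfold sum2 in *; lra).
    assert (Z2 : sum2 (fun a => xiU g alpha a x y * Ev a) = 0) by (rewrite S2; unfold sum2 in *; lra).
    unfold sum2 in Z1, Z2.
    pose proof (PWc x y Hp (Ev 0%nat) (Ev 1%nat) a Ha) as C.
    rewrite Z1, Z2 in C. rewrite !Rmult_0_r, Rplus_0_r in C.
    destruct a as [|[|a]]; try lia; simpl in C; exact C.
Qed.
End Asm.

Lemma kappa0 x y : U (x,y) -> func_dep U alpha (nab g alpha) -> kappa g alpha x y = 0.
Proof. intros Hp Hd. pose proof (Hd x y Hp) as J. unfold jac2 in J.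
  pose proof (nab_pos x y Hp). pose proof (detpos x y Hp).
  assert (0 < sqrt (detg g x y)) by (apply sqrt_lt_R0; auto).
  unfold kappa, etaU, eps, sum2, dalpha. cbv beta iota.
  transitivity ((partial 0%nat alpha x y * partial 1%nat (nab g alpha) x y
     - partial 1%nat alpha x y * partial 0%nat (nab g alpha) x y) / (sqrt (detg g x y) * nab g alpha x y ^ 2)).
  - field. split; lra.
  - rewrite J. unfold Rdiv. ring.
Qed.

Lemma PAsplit x y : U (x,y) ->
  divV g (fun a => fun x' y' => alpha x' y' * TV g alpha T a x' y') x y =
  divV g (fun a => fun x' y' =>
     alpha x' y' * sum2 (fun b => etaVL g alpha b x' y' * TV g alpha T b x' y')
       * etaV g alpha a x' y') x y
  + divV g (fun a => fun x' y' =>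
        alpha x' y' * sum2 (fun b => xiL g alpha b x' y' * TV g alpha T b x' y')
          * xiU g alpha a x' y') x y.
Proof. intros Hp. rewrite <- divV_add; auto.
  - apply divV_ext; auto. intros b x' y' Hb Hq. rewrite (PW3 x' y' Hq b Hb). ring.
  - unfold sum2; dif2.
  - unfold sum2; dif2.
  - unfold sum2; dif2.
  - unfold sum2; dif2.
Qed.

Lemma main_inside :
  (forall x y, U (x, y) ->
     (forall a b, (a < 2)%nat -> (b < 2)%nat ->
        T a b x y = recomb g alpha (TV g alpha T) (T0 g alpha T) a b x y) /\
     (forall (t : nat -> R) (t0 : R),
        let M := recomb g alpha (fun a => cst (t a)) (cst t0) in
        M 0%nat 1%nat x y = M 1%nat 0%nat x y /\
        (forall a, (a < 2)%nat -> TV g alpha M a x y = t a) /\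
        T0 g alpha M x y = t0))
  /\
  (func_indep U alpha (nab g alpha) ->
     ((forall x y, U (x, y) -> forall a, (a < 2)%nat ->
          star_eq g alpha beta omega T33 T a x y)
      <->
      (forall x y, U (x, y) ->
          eqA g alpha beta omega T x y /\ eqB g alpha beta omega T33 T x y)))
  /\
  (func_dep U alpha (nab g alpha) ->
     ((forall x y, U (x, y) -> forall a, (a < 2)%nat ->
          star_eq g alpha beta omega T33 T a x y)
      <->
      (forall x y, U (x, y) ->
          eqB g alpha beta omega T33 T x y /\ eqC g alpha beta omega T x y))).
Proof.
  split; [|split].
  - intros x y Hp. split.
    + intros a b Ha Hb. apply P1a; auto.
    + intros t t0. apply P1b; auto.
  - intros _. split.
    + intros H x y Hp. apply (core x y Hp). apply H; auto.
    + intros H x y Hp. apply (core x y Hp). apply H; auto.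
  - intros Hd.
    assert (EAC : forall x y, U (x,y) -> (eqA g alpha beta omega T x y <-> eqC g alpha beta omega T x y)).
    { intros x y Hp. unfold eqA, eqC. rewrite (kappa0 x y Hp Hd). rewrite (PAsplit x y Hp).
      split; intros; lra. }
    split.
    + intros H x y Hp. destruct (proj1 (core x y Hp) (H x y Hp)) as [HA HB].
      split; auto. apply EAC; auto.
    + intros H x y Hp. apply (core x y Hp). destruct (H x y Hp) as [HB HC].
      split; auto. apply EAC; auto.
Qed.
End Main.

Theorem proposition2p2
  (U : R * R -> Prop) (g : nat -> nat -> Fun) (alpha : Fun)
  (beta : nat -> Fun) (omega T33 : Fun) (T : nat -> nat -> Fun) :
  open U ->
                   
  (forall a b, (a < 2)%nat -> (b < 2)%nat -> smooth U (g a b)) ->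
  smooth U alpha ->
  (forall a, (a < 2)%nat -> smooth U (beta a)) ->
  smooth U omega -> smooth U T33 ->
  (forall a b, (a < 2)%nat -> (b < 2)%nat -> smooth U (T a b)) ->
                                                
  (forall x y, U (x, y) ->
     g 0%nat 1%nat x y = g 1%nat 0%nat x y /\ 0 < g 0%nat 0%nat x y /\ 0 < detg g x y) ->
  (forall x y, U (x, y) -> 0 < alpha x y) ->
                                                
  (forall x y, U (x, y) -> gradsq g alpha x y <> 0) ->
                           
  (forall x y, U (x, y) -> T 0%nat 1%nat x y = T 1%nat 0%nat x y) ->
                                                       
  (forall x y, U (x, y) ->
     (forall a b, (a < 2)%nat -> (b < 2)%nat ->
        T a b x y = recomb g alpha (TV g alpha T) (T0 g alpha T) a b x y) /\
     (forall (t : nat -> R) (t0 : R),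
        let M := recomb g alpha (fun a => cst (t a)) (cst t0) in
        M 0%nat 1%nat x y = M 1%nat 0%nat x y /\
        (forall a, (a < 2)%nat -> TV g alpha M a x y = t a) /\
        T0 g alpha M x y = t0))
  /\
                                                                 
  (func_indep U alpha (nab g alpha) ->
     ((forall x y, U (x, y) -> forall a, (a < 2)%nat ->
          star_eq g alpha beta omega T33 T a x y)
      <->
      (forall x y, U (x, y) ->
          eqA g alpha beta omega T x y /\ eqB g alpha beta omega T33 T x y)))
  /\
                                                               
  (func_dep U alpha (nab g alpha) ->
     ((forall x y, U (x, y) -> forall a, (a < 2)%nat ->
          star_eq g alpha beta omega T33 T a x y)
      <->
      (forall x y, U (x, y) ->
          eqB g alpha beta omega T33 T x y /\ eqC g alpha beta omega T x y))).
Proof.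
  intros HU Hgs Has Hbs Hos HT33s HTs Hmet Hal Hgr HTsym.
  eapply main_inside; eauto.
Qed.
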